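(* Let $(\mathcal T(n))_{n\in\mathbb N}$ be the triangle Markov chain obtained by iterated random barycentric subdivision started from an arbitrary triangle, and let $J_n=J(\mathcal T(n))$. Then almost surely $\limsup_{n\to\infty}J_n=+\infty$.
   Context: A triangle is given by three points of the plane which are not all equal. Barycentric subdivision: if a triangle has vertices $A,B,C$, let $D,E,F$ be the midpoints of $[A,B],[B,C],[C,A]$ and $G$ its barycenter; the medians cut it into the six triangles $\{A,D,G\},\{D,B,G\},\{B,E,G\},\{E,C,G\},\{C,F,G\},\{F,A,G\}$. The triangle Markov chain: $\mathcal T(0)$ is given and $\mathcal T(n+1)$ is chosen uniformly among the six triangles of the barycentric subdivision of $\mathcal T(n)$, independently of the past. For a triangle $\mathcal T$, $J(\mathcal T)\in(0,+\infty]$ is the sum of the squares of the lengths of its three edges divided by its area (with $J(\mathcal T)=+\infty$ iff $\mathcal T$ is flat, i.e. has zero area). *)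

(* Defs.v *)
From HB Require Import structures.
From mathcomp Require Import all_boot all_order all_algebra.
From mathcomp Require Import all_classical all_reals all_analysis.
Set Implicit Arguments. Unset Strict Implicit. Unset Printing Implicit Defensive.
Import Order.TTheory GRing.Theory Num.Theory.
Local Open Scope classical_set_scope.
Local Open Scope ring_scope.

Section Triangles.
Variable R : realType.

Definition point := (R * R)%type.
Definition triangle := (point * point * point)%type.

Definition tA (t : triangle) : point := t.1.1.
Definition tB (t : triangle) : point := t.1.2.
Definition tC (t : triangle) : point := t.2.

Definition not_all_equal (t : triangle) : Prop :=
  ~ (tA t = tB t /\ tB t = tC t).

Definition midpoint (p q : point) : point := ((p.1 + q.1) / 2, (p.2 + q.2) / 2).
Definition barycenter (t : triangle) : point :=
  (((tA t).1 + (tB t).1 + (tC t).1) / 3, ((tA t).2 + (tB t).2 + (tC t).2) / 3).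

Definition sqdist (p q : point) : R := (p.1 - q.1) ^+ 2 + (p.2 - q.2) ^+ 2.

Definition area (t : triangle) : R :=
  `| ((tB t).1 - (tA t).1) * ((tC t).2 - (tA t).2)
     - ((tC t).1 - (tA t).1) * ((tB t).2 - (tA t).2) | / 2.

Definition J (t : triangle) : \bar R :=
  if area t == 0 then +oo%E
  else ((sqdist (tA t) (tB t) + sqdist (tB t) (tC t) + sqdist (tC t) (tA t))
          / area t)%:E.

Definition subdiv (t : triangle) (k : 'I_6) : triangle :=
  let A := tA t in let B := tB t in let C := tC t in
  let D := midpoint A B in let E := midpoint B C in let F := midpoint C A in
  let G := barycenter t in
  match val k with
  | 0 => (A, D, G)
  | 1 => (D, B, G)
  | 2 => (B, E, G)
  | 3 => (E, C, G)
  | 4 => (C, F, G)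
  | _ => (F, A, G)
  end.

Fixpoint chain (T0 : triangle) (xi : nat -> 'I_6) (n : nat) : triangle :=
  match n with
  | 0 => T0
  | n'.+1 => subdiv (chain T0 xi n') (xi n')
  end.

End Triangles.

(* xi : nat -> Omega -> 'I_6 is an i.i.d. sequence of uniform choices in
   {0,...,5}: every event {xi n = v} is measurable and for every finite set of
   indices the joint law is the uniform product law. *)
Definition iid_uniform6 {d} {Omega : measurableType d} {R : realType}
  (P : probability Omega R) (xi : nat -> Omega -> 'I_6) : Prop :=
  (forall n (v : 'I_6), measurable [set w | xi n w = v]) /\
  (forall (S : seq nat) (v : nat -> 'I_6), uniq S ->
     P (\bigcap_(i in [set i | i \in S]) [set w | xi i w = v i]) =
     ((6%:R ^-1) ^+ size S)%:E).

(* Main.v *)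
Require Import Defs.
From mathcomp Require Import all_boot all_order all_algebra.
From mathcomp Require Import all_classical all_reals all_analysis.
From mathcomp Require Import ring lra zify.
Import Order.TTheory GRing.Theory Num.Theory.
Local Open Scope classical_set_scope.
Local Open Scope ring_scope.

Section Geo.
Variable R : realType.
Implicit Types t : triangle R.

Definition sub0 t := subdiv t ord0.
Definition rr t := sqdist (tA t) (tB t) / area t.
Definition Jv t := (sqdist (tA t) (tB t) + sqdist (tB t) (tC t) + sqdist (tC t) (tA t)) / area t.

Lemma area_sub0 t : area (sub0 t) = area t / 6.
Proof.
rewrite /area /sub0 /subdiv /= /tA /tB /tC /midpoint /barycenter /=.
set x := (X in `|X| / 2 / 6).
rewrite (_ : _ - _ = x / 6); last by rewrite /x; field.
rewrite normrM (@ger0_norm _ (6^-1)) //; lra.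
Qed.

Lemma sqd_sub0 t : sqdist (tA (sub0 t)) (tB (sub0 t)) = sqdist (tA t) (tB t) / 4.
Proof. rewrite /sqdist /sub0 /subdiv /tA /tB /midpoint /=. by field. Qed.

Lemma area_ge0 t : 0 <= area t.
Proof. rewrite /area; apply: divr_ge0 => //. Qed.

Lemma iter_sub0 t i : area t != 0 ->
  area (iter i sub0 t) != 0 /\ rr (iter i sub0 t) = (3/2)^+i * rr t.
Proof.
move=> h; elim: i => [|i [IH1 IH2]] /=; first by rewrite expr0 mul1r.
split; first by rewrite area_sub0 mulf_neq0 // invr_eq0.
rewrite exprS -mulrA -IH2 /rr sqd_sub0 area_sub0.
by field; rewrite IH1.
Qed.

Lemma sqdist_ge0 p q : 0 <= sqdist p q :> R.
Proof. by rewrite /sqdist addr_ge0 // sqr_ge0. Qed.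

Lemma Jv_ge_rr t : area t != 0 -> rr t <= Jv t.
Proof.
move=> h; have hp : 0 < area t by rewrite lt_def h area_ge0.
rewrite /rr /Jv ler_pM2r ?invr_gt0 //.
have := sqdist_ge0 (tB t) (tC t); have := sqdist_ge0 (tC t) (tA t); lra.
Qed.

Lemma rrJv t : area t != 0 -> 4 <= rr t * Jv t.
Proof.
move=> h; have hp : 0 < area t by rewrite lt_def h area_ge0.
have key : 4 * area t ^+ 2 <= sqdist (tA t) (tB t) * sqdist (tC t) (tA t).
  rewrite /area exprMn -[`|_| ^+ 2]/(`|_| ^+ 2) real_normK ?num_real //.
  rewrite /sqdist.
  set a := (tA t).1; set b := (tA t).2; set c := (tB t).1; set e := (tB t).2.
  set f := (tC t).1; set g := (tC t).2.
  have := sqr_ge0 ((c - a) * (f - a) + (e - b) * (g - b)).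
  move=> H; rewrite -subr_ge0; apply: le_trans H _; rewrite le_eqVlt; apply/orP; left; apply/eqP.
  by field.
have h1 := sqdist_ge0 (tA t) (tB t); have h2 := sqdist_ge0 (tB t) (tC t);
have h3 := sqdist_ge0 (tC t) (tA t).
rewrite /rr /Jv.
have -> : sqdist (tA t) (tB t) / area t *
    ((sqdist (tA t) (tB t) + sqdist (tB t) (tC t) + sqdist (tC t) (tA t)) / area t)
    = sqdist (tA t) (tB t) *
    (sqdist (tA t) (tB t) + sqdist (tB t) (tC t) + sqdist (tC t) (tA t)) / area t ^+ 2.
  by field; rewrite h.
rewrite ler_pdivlMr ?exprn_gt0 //.
apply: (le_trans key); rewrite ler_wpM2l //; lra.
Qed.
End Geo.
Arguments sub0 {R}. Arguments rr {R}. Arguments Jv {R}.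
Arguments area_sub0 {R}. Arguments sqd_sub0 {R}. Arguments area_ge0 {R}.
Arguments iter_sub0 {R}. Arguments sqdist_ge0 {R}. Arguments Jv_ge_rr {R}. Arguments rrJv {R}.
Lemma geo0 (R : realType) (q x : R) : 0 < q -> q <= 1 -> 0 <= x ->
  (forall m, x <= (1 - q) ^+ m) -> x = 0.
Proof.
move=> q0 q1 x0 h.
have bern m : (1 - q) ^+ m * (1 + m%:R * q) <= 1.
  elim: m => [|m IH]; first by rewrite expr0 mul0r addr0 mulr1.
  have p0 : 0 <= (1 - q) ^+ m by rewrite exprn_ge0 // subr_ge0.
  apply: le_trans IH; rewrite exprSr -mulrA -natr1.
  apply: ler_wpM2l => //. have := mulr_ge0 (ler0n R m) (ltW q0). have := mulr_ge0 (ltW q0) (ltW q0). nra.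
apply/eqP; rewrite eq_le x0 andbT leNgt; apply/negP => xp.
have xq : 0 < x * q by rewrite mulr_gt0.
set m := Num.bound ((x * q)^-1).
have hm : (x * q)^-1 < m%:R by apply: archi_boundP; rewrite invr_ge0 ltW.
have : x * (1 + m%:R * q) <= 1.
  apply: le_trans (bern m); rewrite ler_wpM2r // ?h //.
  by rewrite addr_ge0 // mulr_ge0 // ltW.
have : 1 < m%:R * (x * q) by rewrite -ltr_pdivrMr // div1r.
nra.
Qed.

Section Prob.
Context d (Omega : measurableType d) (R : realType) (P : probability Omega R)
  (xi : nat -> Omega -> 'I_6).
Hypothesis hxi : iid_uniform6 P xi.

Definition cyl (S : seq nat) (v : nat -> 'I_6) : set Omega :=
  [set w | forall i, i \in S -> xi i w = v i].

Lemma cyl_meas S v : measurable (cyl S v).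
Proof.
elim: S => [|a S IH].
  by rewrite (_ : cyl _ _ = setT) //; apply/seteqP; split => w //= _ i.
rewrite (_ : cyl _ _ = [set w | xi a w = v a] `&` cyl S v).
  by apply: measurableI => //; exact: hxi.1.
apply/seteqP; split => w /=.
  by move=> h; split; [apply: h; rewrite mem_head | move=> i hi; apply: h; rewrite inE hi orbT].
by move=> [h1 h2] i; rewrite inE => /orP [/eqP -> //| /h2].
Qed.

Lemma P_cyl S v : uniq S -> P (cyl S v) = ((6%:R^-1) ^+ size S)%:E.
Proof.
move=> u; rewrite -(hxi.2 S v u); congr (P _).
Qed.

Variables (N L : nat).
Definition blk j := iota (N + j * L) L.
Definition Zb j := cyl (blk j) (fun _ => ord0).
Definition Eb m := [set w | forall j, (j < m)%N -> ~ Zb j w].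
Definition qq : R := (6%:R^-1) ^+ L.

Lemma Eb_meas m : measurable (Eb m).
Proof.
elim: m => [|m IH].
  by rewrite (_ : Eb 0 = setT) //; apply/seteqP; split => w //= _ j.
rewrite (_ : Eb _ = Eb m `&` ~` Zb m).
  by apply: measurableI => //; apply: measurableC; exact: cyl_meas.
apply/seteqP; split => w /=.
  move=> h; split; [move=> j hj; apply: h; lia | apply: h; lia].
move=> [h1 h2] j; rewrite ltnS leq_eqVlt => /orP [/eqP -> //| /h1 //].
Qed.

Lemma claim m : forall S v, uniq S -> (forall i, i \in S -> (N + m * L <= i)%N) ->
  P (Eb m `&` cyl S v) = (((1 - qq) ^+ m) * (6%:R^-1) ^+ size S)%:E.
Proof.
elim: m => [|m IH] S v uS hS.
  rewrite expr0 mul1r -(@P_cyl S v) //; congr (P _); apply/seteqP; split => w /=.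
    by case.
  by move=> h; split => // j.
have E1 : Eb m.+1 `&` cyl S v = (Eb m `&` cyl S v) `\` Zb m.
  apply/seteqP; split => w /=.
    move=> [h1 h2]; split; first split => //.
      by move=> j hj; apply: h1; lia.
    by apply: h1.
  move=> [[h1 h2] h3]; split => // j; rewrite ltnS leq_eqVlt => /orP [/eqP -> //| /h1 //].
pose v' i := if (i < N + m.+1 * L)%N then ord0 else v i.
have E2 : (Eb m `&` cyl S v) `&` Zb m = Eb m `&` cyl (blk m ++ S) v'.
  apply/seteqP; split => w /=.
    move=> [[h1 h2] h3]; split => // i; rewrite mem_cat => /orP [hi | hi].
      rewrite /v' ifT; first by apply: h3.
      by move: hi; rewrite mem_iota; lia.
    rewrite /v' ifF; first by apply: h2.
    by have := hS _ hi; lia.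
  move=> [h1 h2]; split; first split => //.
    move=> i hi; rewrite h2 ?mem_cat ?hi ?orbT // /v' ifF //.
    by have := hS _ hi; lia.
  move=> i hi; rewrite h2 ?mem_cat ?hi // /v' ifT //.
  by move: hi; rewrite mem_iota; lia.
have mA : measurable (Eb m `&` cyl S v) by apply: measurableI; [exact: Eb_meas|exact: cyl_meas].
rewrite E1 measureD //; last first.
  by apply: (le_lt_trans (probability_le1 P mA)); rewrite ltey.
  by apply: cyl_meas.
rewrite E2.
have h1 := IH S v uS ltac:(move=> i /hS; lia).
have h2 := IH (blk m ++ S) v'.
have u2 : uniq (blk m ++ S).
  rewrite cat_uniq uS iota_uniq andbT /=; apply/hasPn => i /hS; rewrite mem_iota; lia.
have h3 := h2 u2 ltac:(move=> i; rewrite mem_cat mem_iota => /orP [|/hS]; lia).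
transitivity (((1 - qq) ^+ m * 6%:R^-1 ^+ size S)%:E -
   ((1 - qq) ^+ m * 6%:R^-1 ^+ size (blk m ++ S))%:E)%E.
  by rewrite -h1 -h3.
- rewrite -EFinB; congr (_%:E).
  rewrite size_cat size_iota exprD exprS /qq; ring.
Qed.

Lemma Eb_P m : P (Eb m) = ((1 - qq) ^+ m)%:E.
Proof.
have := @claim m [::] (fun _ => ord0) erefl ltac:(by []).
rewrite expr0 mulr1 => <-; congr (P _); apply/seteqP; split => w /=.
  by move=> h; split => // i.
by case.
Qed.

Lemma qq_gt0 : 0 < qq.
Proof. by rewrite /qq exprn_gt0 // invr_gt0 ltr0n. Qed.

Lemma qq_le1 : qq <= 1.
Proof. by rewrite /qq exprn_ile1 // ?invr_ge0 ?ler0n // invf_le1 ?ler1n ?ltr0n. Qed.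

Lemma bad_negligible : P.-negligible (\bigcap_m Eb m).
Proof.
exists (\bigcap_m Eb m); split => //.
  by apply: bigcapT_measurable => m; exact: Eb_meas.
have mB : measurable (\bigcap_m Eb m) by apply: bigcapT_measurable => m; exact: Eb_meas.
have fin : P (\bigcap_m Eb m) \is a fin_num.
  by rewrite ge0_fin_numE ?measure_ge0 // (le_lt_trans (probability_le1 P mB)) ?ltey.
rewrite -(fineK fin); congr (_%:E).
set x := fine _.
have x0 : 0 <= x by rewrite /x fine_ge0 // measure_ge0.
have hx m : x <= (1 - qq) ^+ m.
  rewrite -lee_fin /x fineK // -Eb_P; apply: le_measure; rewrite ?inE //.
    exact: Eb_meas.
  by move=> w /(_ m I).
apply: geo0 qq_gt0 qq_le1 x0 hx.
Qed.
End Prob.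

Lemma bern32 (R : realType) n : 1 + n%:R / 2 <= (3 / 2 : R) ^+ n.
Proof.
elim: n => [|n IH]; first by rewrite expr0 mul0r addr0.
rewrite exprS -natr1.
have h0 : 0 <= n%:R / 2 :> R by rewrite divr_ge0.
apply: le_trans (_ : 3 / 2 * (1 + n%:R / 2) <= _); last first.
  by rewrite ler_wpM2l // divr_ge0.
lra.
Qed.

Lemma grow (R : realType) (t : triangle R) M L : area t != 0 -> 0 < M -> Jv t <= M ->
  (3/2) ^+ L * (4 / M) <= Jv (iter L (@sub0 R) t).
Proof.
move=> ha M0 hJ.
have [a1 a2] := iter_sub0 t L ha.
apply: (le_trans _ (Jv_ge_rr _ a1)); rewrite a2 ler_wpM2l ?exprn_ge0 ?divr_ge0 //.
have hp : 0 < area t by rewrite lt_def ha area_ge0.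
have r0 : 0 <= rr t by rewrite /rr divr_ge0 ?sqdist_ge0 ?area_ge0.
have := rrJv t ha.
rewrite ler_pdivrMr //.
move=> h; apply: le_trans h _; rewrite ler_wpM2l //.
Qed.

Lemma chain_iter (R : realType) (T0 : triangle R) f n i :
  (forall k, (k < i)%N -> f (n + k)%N = ord0) ->
  chain T0 f (n + i) = iter i (@sub0 R) (chain T0 f n).
Proof.
elim: i => [|i IH] h; first by rewrite addn0.
rewrite addnS /= IH; last by move=> k hk; apply: h; lia.
by rewrite h.
Qed.

Lemma J_ge0 (R : realType) (t : triangle R) : (0 <= J t)%E.
Proof.
rewrite /J; case: eqP => _; first by apply: leey.
change (0%:E <= ((sqdist (tA t) (tB t) + sqdist (tB t) (tC t) + sqdist (tC t) (tA t)) / area t)%:E)%E.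
rewrite lee_fin divr_ge0 ?area_ge0 //.
by apply: addr_ge0; [apply: addr_ge0|]; apply: sqdist_ge0.
Qed.

Lemma esup_bound (R : realType) (u : (\bar R)^nat) : (forall n, (0 <= u n)%E) ->
  limn_esup u != +oo%E -> exists s : R, exists N, forall k, (N <= k)%N -> (u k <= s%:E)%E.
Proof.
move=> u0 hu.
have e : limn_esup u = ereal_inf (range (esups u)).
  by rewrite limn_esup_lim; apply/cvg_lim => //; exact: cvg_esups_inf.
have : (ereal_inf (range (esups u)) < +oo)%E by rewrite -e ltey.
move=> /ereal_inf_lt [_ [N _ <-] hN].
have ub k : (N <= k)%N -> (u k <= esups u N)%E.
  by move=> hk; apply: ereal_sup_ubound; exists k.
have fin : esups u N \is a fin_num.
  rewrite ge0_fin_numE ?hN //; exact: le_trans (u0 N) (ub N (leqnn N)).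
by exists (fine (esups u N)), N => k hk; rewrite fineK //; exact: ub.
Qed.

Theorem proposition4 (d : measure_display) (Omega : measurableType d)
  (R : realType) (P : probability Omega R) (xi : nat -> Omega -> 'I_6)
  (T0 : triangle R) :
  not_all_equal T0 -> iid_uniform6 P xi ->
  {ae P, forall w, limn_esup (fun n => J (chain T0 (fun k => xi k w) n)) = +oo%E}.
Proof.
move=> _ hxi; rewrite /prop_near1 /nbhs /=.
pose LL (M : nat) := (2 * (M.+1 * M.+1))%N.
pose Bad M N := \bigcap_m @Eb _ Omega xi N (LL M) m.
apply: (@negligibleS _ _ _ _ (\bigcup_M \bigcup_N Bad M N)); last first.
  apply: negligible_bigcup => M; apply: negligible_bigcup => N.
  exact: (@bad_negligible _ _ _ P xi hxi N (LL M)).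
move=> w /= hw.
have [s [N hs]] := @esup_bound R _ (fun n => J_ge0 _ _) (introN eqP hw).
pose M := Num.truncn (Num.max s 0).
have sM : s < M.+1%:R.
  apply: le_lt_trans (truncnS_gt _); by rewrite le_max lexx.
exists M => //; exists N => // m _ j _ hZ.
set L := LL M.
set t := chain T0 (fun k => xi k w) (N + j * L).
have ht : (J t <= s%:E)%E by apply: hs; lia.
have e1 : chain T0 (fun k => xi k w) (N + j * L + L) = iter L (@sub0 R) t.
  apply: chain_iter => k hk; apply: hZ; rewrite mem_iota; lia.
have h2 : (J (chain T0 (fun k => xi k w) (N + j * L + L)) <= s%:E)%E by apply: hs; lia.
rewrite e1 in h2.
have ha : area t != 0.
  by apply/negP => /eqP h; move: ht; rewrite /J h eqxx leye_eq.
have Mp : 0 < M.+1%:R :> R by rewrite ltr0n.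
have hJv : Jv t <= M.+1%:R.
  by move: ht; rewrite /J (negbTE ha) lee_fin => h; apply: le_trans h (ltW sM).
have g := grow R t _ L ha Mp hJv.
have [a1 _] := iter_sub0 t L ha.
move: h2; rewrite /J (negbTE a1) lee_fin => h2.
have b := bern32 R L.
have eL : L%:R / 2 = M.+1%:R * M.+1%:R :> R.
  by rewrite /L /LL natrM natrM; field.
rewrite eL in b.
set X := M.+1%:R : R in Mp hJv sM b g eL.
have : (1 + X * X) * (4 / X) <= (3/2) ^+ L * (4 / X).
  by rewrite ler_wpM2r // divr_ge0 // ltW.
have -> : (1 + X * X) * (4 / X) = 4 / X + 4 * X by field; rewrite gt_eqF.
have : 0 < 4 / X by rewrite divr_gt0.
fold (Jv (iter L (@sub0 R) t)) in h2.
move=> p q; have := le_trans q g; clearbody X; lra.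
Qed.
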